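(* Let $a>0$ with $2a/\sqrt3<\pi/2$, let $0<c<2\pi/3$, and let $\varphi_c:\mathbb{R}^3\to\mathbb{R}^3$ be $(p,z)\mapsto(r_{2\pi/3}(p),z+c)$, where $r_{2\pi/3}$ is the rotation of $\mathbb{R}^2$ by angle $2\pi/3$ about the origin; $\varphi_c$ is an isometry of $(\mathbb{R}^3,h)$. Let $\gamma_0$ be the vertical segment from $(0,0,z_0)$ to $(0,0,z_0+c)=\varphi_c(0,0,z_0)$. Let $t\mapsto\gamma_t$, $t\in(-\varepsilon,\varepsilon)$, be a piecewise smooth variation of $\gamma_0$ such that each $\gamma_t$ is an $h$-geodesic contained in the interior of the prism $D_0$ (not meeting the singular set), joining a point $m_t$ to $\varphi_c(m_t)$, with $m_0=(0,0,z_0)$ and $\frac{d}{dt}m_t|_{t=0}$ a nonzero horizontal vector. Then the second variation of length at $\gamma_0$ is strictly positive: $\frac{d^2}{dt^2}\big|_{t=0}L(\gamma_t)>0$.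
   Context: $\Delta\subset\mathbb{R}^2$ is the hexagonal lattice generated by $(2a,0)$ and $(a,a\sqrt3)$, and $D_0=V_0\times\mathbb{R}$ is the vertical prism over the Voronoi cell $V_0$ (regular hexagon of inradius $a$ centered at the origin). $h=dx^2+dy^2+\cos^2\!\big(\mathrm{dist}((x,y),\Delta)\big)\,dz^2$ on $\mathbb{R}^3$; in the interior of $D_0$, in cylindrical coordinates about the $z$-axis, $h=dr^2+r^2d\theta^2+\cos^2 r\,dz^2$, which is smooth there. The singular set is the union of the boundaries of the prisms $D_p$, $p\in\Delta$. $L(\gamma)=\int (h(\gamma',\gamma'))^{1/2}ds$. *)

(* Defs.v *)
From Stdlib Require Import Reals ZArith.
From Coquelicot Require Import Coquelicot.
Open Scope R_scope.

Definition lat_pt (a : R) (m n : Z) : R * R :=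
  (2 * a * IZR m + a * IZR n, a * sqrt 3 * IZR n).

Definition latdist (a x y : R) : R :=
  real (Glb_Rbar (fun d => exists m n : Z,
     d = sqrt ((x - fst (lat_pt a m n)) ^ 2 + (y - snd (lat_pt a m n)) ^ 2))).

(** Coefficient of dz^2 in h : cos^2 (dist((x,y),Delta)). *)
Definition hF (a x y : R) : R := (cos (latdist a x y)) ^ 2.

Definition dFx (a x y : R) : R := Derive (fun u => hF a u y) x.
Definition dFy (a x y : R) : R := Derive (fun u => hF a x u) y.

Definition h_quad (a : R) (p v : R * R * R) : R :=
  let '(x, y, _) := p in let '(vx, vy, vz) := v in
  vx ^ 2 + vy ^ 2 + hF a x y * vz ^ 2.

(** (x,y,z) lies in the interior of the prism D_0 = V_0 x R: (x,y) is
    strictly closer to the origin than to every other lattice point. *)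
Definition in_int_D0 (a x y : R) : Prop :=
  forall m n : Z, (m, n) <> (0%Z, 0%Z) ->
    x ^ 2 + y ^ 2 < (x - fst (lat_pt a m n)) ^ 2 + (y - snd (lat_pt a m n)) ^ 2.

Definition phi (c : R) (p : R * R * R) : R * R * R :=
  let '(x, y, z) := p in
  (x * cos (2 * PI / 3) - y * sin (2 * PI / 3),
   x * sin (2 * PI / 3) + y * cos (2 * PI / 3), z + c).

(** A curve s |-> (X s, Y s, Z s), s in [0,1], is an h-geodesic contained in
    the interior of D_0: it stays in the interior (where h is smooth) and
    satisfies the geodesic equations of h = dx^2 + dy^2 + F(x,y) dz^2. *)
Definition is_h_geodesic (a : R) (X Y Z : R -> R) : Prop :=
  exists X1 Y1 Z1 X2 Y2 Z2 : R -> R,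
  forall s, 0 <= s <= 1 ->
    in_int_D0 a (X s) (Y s) /\
    is_derive X s (X1 s) /\ is_derive Y s (Y1 s) /\ is_derive Z s (Z1 s) /\
    is_derive X1 s (X2 s) /\ is_derive Y1 s (Y2 s) /\ is_derive Z1 s (Z2 s) /\
    X2 s = / 2 * dFx a (X s) (Y s) * (Z1 s) ^ 2 /\
    Y2 s = / 2 * dFy a (X s) (Y s) * (Z1 s) ^ 2 /\
    Z2 s = - (dFx a (X s) (Y s) * X1 s + dFy a (X s) (Y s) * Y1 s) * Z1 s
             / hF a (X s) (Y s).

Fixpoint Ck2 (k : nat) (eps : R) (f : R -> R -> R) : Prop :=
  match k with
  | O => forall t s, Rabs t < eps ->
           continuous (fun p : R * R => f (fst p) (snd p)) (t, s)
  | S k' =>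
      (forall t s, Rabs t < eps ->
           continuous (fun p : R * R => f (fst p) (snd p)) (t, s)) /\
      exists ft fs : R -> R -> R,
        (forall t s, Rabs t < eps ->
           is_derive (fun u => f u s) t (ft t s) /\
           is_derive (fun u => f t u) s (fs t s)) /\
        Ck2 k' eps ft /\ Ck2 k' eps fs
  end.

Definition smooth2 (eps : R) (f : R -> R -> R) : Prop := forall k, Ck2 k eps f.

Definition Lh (a : R) (X Y Z : R -> R) : R :=
  RInt (fun s => sqrt (h_quad a (X s, Y s, Z s) (Derive X s, Derive Y s, Derive Z s)))
       0 1.

(* Main.v *)
Require Import Defs.
From Stdlib Require Import Reals ZArith Lra Lia Psatz.
From Coquelicot Require Import Coquelicot.
Open Scope R_scope.

Lemma deriv_zero01 (h : R -> R) s l :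
  0 <= s <= 1 -> (forall x, 0 <= x <= 1 -> h x = 0) -> is_derive h s l -> l = 0.
Proof.
  intros Hs Hz Hd. apply is_derive_Reals in Hd.
  destruct (Req_dec l 0) as [|Hl]; auto. exfalso.
  assert (He : 0 < Rabs l) by (apply Rabs_pos_lt; auto).
  destruct (Hd (Rabs l) He) as [[d Hdp] Hdd]. simpl in Hdd.
  set (m := Rmin (d/2) (1/2)).
  assert (Hm : 0 < m) by (unfold m; apply Rmin_pos; lra).
  assert (Hm2 : m <= d/2) by apply Rmin_l.
  assert (Hm3 : m <= 1/2) by apply Rmin_r.
  destruct (Rle_dec s (1/2)) as [Hs2|Hs2].
  - specialize (Hdd m). rewrite (Hz (s+m)) in Hdd by lra. rewrite (Hz s) in Hdd by lra.
    assert (Hq : (0 - 0) / m - l = - l) by (field; lra). rewrite Hq, Rabs_Ropp in Hdd.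
    assert (Rabs m < d) by (rewrite Rabs_right; lra).
    assert (Hn : m <> 0) by (intro; lra). specialize (Hdd Hn H). lra.
  - specialize (Hdd (-m)). rewrite (Hz (s+-m)) in Hdd by lra. rewrite (Hz s) in Hdd by lra.
    assert (Hq : (0 - 0) / (-m) - l = - l) by (field; lra). rewrite Hq, Rabs_Ropp in Hdd.
    assert (Rabs m < d) by (rewrite Rabs_right; lra).
    assert (Hn : -m <> 0) by (intro; lra). rewrite Rabs_Ropp in Hdd; specialize (Hdd Hn H). lra.
Qed.

Lemma deriv_agree01 (f g : R -> R) s l1 l2 :
  0 <= s <= 1 -> (forall x, 0 <= x <= 1 -> f x = g x) ->
  is_derive f s l1 -> is_derive g s l2 -> l1 = l2.
Proof.
  intros Hs Hfg H1 H2.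
  assert (Hd : is_derive (fun x => f x - g x) s (l1 - l2)).
  { apply (is_derive_minus f g s l1 l2); auto. }
  assert (l1 - l2 = 0). { eapply deriv_zero01; eauto. intros x Hx. cbv beta; rewrite Hfg; auto; ring. }
  lra.
Qed.

Lemma locally_strip (eps t : R) (P : R -> Prop) :
  Rabs t < eps -> (forall u, Rabs u < eps -> P u) -> locally t P.
Proof.
  intros Ht HP. assert (Hp : 0 < eps - Rabs t) by lra.
  exists (mkposreal _ Hp). intros u Hu. apply HP.
  unfold ball in Hu; simpl in Hu; unfold AbsRing_ball, abs, minus, plus, opp in Hu; simpl in Hu.
  pose proof (Rabs_triang_inv u t). 
  assert (Rabs (u - t) < eps - Rabs t) by exact Hu. lra.
Qed.

Lemma deriv_unique_loc (f g : R -> R) t eps l1 l2 :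
  Rabs t < eps -> (forall u, Rabs u < eps -> f u = g u) ->
  is_derive f t l1 -> is_derive g t l2 -> l1 = l2.
Proof.
  intros Ht Hfg H1 H2. apply is_derive_unique in H2. rewrite <- H2.
  symmetry. apply is_derive_unique. eapply is_derive_ext_loc; [|exact H1].
  eapply locally_strip; eauto.
Qed.

Lemma cont_to_2d (f : R -> R -> R) t s :
  continuous (fun p : R * R => f (fst p) (snd p)) (t, s) -> continuity_2d_pt f t s.
Proof. intros H. apply continuity_2d_pt_filterlim. exact H. Qed.

Lemma locally_2d_strip eps t s (P : R -> R -> Prop) :
  Rabs t < eps -> (forall u v, Rabs u < eps -> P u v) -> locally_2d P t s.
Proof.
  intros Ht HP. assert (Hp : 0 < eps - Rabs t) by lra.
  exists (mkposreal _ Hp). intros u v Hu Hv. simpl in Hu. apply HP.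
  pose proof (Rabs_triang_inv u t). lra.
Qed.

Lemma schwarz_strip eps (f ft fs dts dst : R -> R -> R) :
  (forall t s, Rabs t < eps -> is_derive (fun u => f u s) t (ft t s)) ->
  (forall t s, Rabs t < eps -> is_derive (fun u => f t u) s (fs t s)) ->
  (forall t s, Rabs t < eps -> is_derive (fun u => ft t u) s (dts t s)) ->
  (forall t s, Rabs t < eps -> is_derive (fun u => fs u s) t (dst t s)) ->
  (forall t s, Rabs t < eps -> continuous (fun p : R * R => dts (fst p) (snd p)) (t, s)) ->
  (forall t s, Rabs t < eps -> continuous (fun p : R * R => dst (fst p) (snd p)) (t, s)) ->
  forall t s, Rabs t < eps -> dts t s = dst t s.
Proof.
  intros Hft Hfs Hdts Hdst Cts Cst t s Ht.
  assert (Efs : forall z w, Rabs z < eps -> Derive (fun w' => f z w') w = fs z w).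
  { intros z w Hz. apply is_derive_unique. apply Hfs; auto. }
  assert (Eft : forall z w, Rabs z < eps -> Derive (fun z' => f z' w) z = ft z w).
  { intros z w Hz. apply is_derive_unique. apply Hft; auto. }
  assert (L1 : forall u v, Rabs u < eps ->
     is_derive (fun z => Derive (fun w => f z w) v) u (dst u v)).
  { intros u v Hu. eapply is_derive_ext_loc; [|apply (Hdst u v Hu)].
    eapply locally_strip; eauto. intros z Hz. simpl. rewrite Efs; auto. }
  assert (L2 : forall u v, Rabs u < eps ->
     is_derive (fun z => Derive (fun w => f w z) u) v (dts u v)).
  { intros u v Hu. eapply is_derive_ext; [|apply (Hdts u v Hu)].
    intros z. simpl. rewrite Eft; auto. }
  assert (S := Schwarz f t s).
  assert (Ea : Derive (fun z => Derive (fun w => f z w) s) t = dst t s)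
    by (apply is_derive_unique; auto).
  assert (Eb : Derive (fun z => Derive (fun w => f w z) t) s = dts t s)
    by (apply is_derive_unique; auto).
  rewrite <- Ea, <- Eb. symmetry. apply S.
  - apply (locally_2d_strip eps); auto. intros u v Hu. repeat split.
    + eexists; apply Hft; auto.
    + eexists; apply Hfs; auto.
    + eexists; apply L1; auto.
    + eexists; apply L2; auto.
  - apply continuity_2d_pt_ext_loc with (f := dst).
    + apply (locally_2d_strip eps); auto. intros u v Hu. symmetry; apply is_derive_unique; auto.
    + apply cont_to_2d; auto.
  - apply continuity_2d_pt_ext_loc with (f := dts).
    + apply (locally_2d_strip eps); auto. intros u v Hu. symmetry; apply is_derive_unique; auto.
    + apply cont_to_2d; auto.
Qed.

Lemma Ck2_cont k eps f : Ck2 k eps f ->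
  forall t s, Rabs t < eps -> continuous (fun p : R * R => f (fst p) (snd p)) (t, s).
Proof. destruct k; simpl; [auto | intros [H _]; auto]. Qed.

Lemma smooth_facts eps (f : R -> R -> R) : 0 < eps -> smooth2 eps f ->
  exists ft fs dts dss dtt : R -> R -> R, exists d3 : R -> R,
  (forall t s, Rabs t < eps -> is_derive (fun u => f u s) t (ft t s)) /\
  (forall t s, Rabs t < eps -> is_derive (fun u => f t u) s (fs t s)) /\
  (forall t s, Rabs t < eps -> is_derive (fun u => ft t u) s (dts t s)) /\
  (forall t s, Rabs t < eps -> is_derive (fun u => fs u s) t (dts t s)) /\
  (forall t s, Rabs t < eps -> is_derive (fun u => fs t u) s (dss t s)) /\
  (forall t s, Rabs t < eps -> is_derive (fun u => ft u s) t (dtt t s)) /\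
  (forall s, is_derive (fun u => dts 0 u) s (d3 s)) /\
  (forall s, is_derive (fun u => dss u s) 0 (d3 s)) /\
  (forall t s, Rabs t < eps -> continuous (fun p : R * R => f (fst p) (snd p)) (t, s)).
Proof.
  intros He Hs. specialize (Hs 4%nat). simpl in Hs.
  destruct Hs as [Cf [ft [fs [Hd [C3ft C3fs]]]]].
  destruct C3ft as [Cft [ftt [fts [Hd2 [C2ftt C2fts]]]]].
  destruct C3fs as [Cfs [fst' [fss [Hd3 [C2fst C2fss]]]]].
  destruct C2fts as [Cfts _].
  destruct C2fst as [Cfst [fstt [fsts [Hd5 [_ C1fsts]]]]].
  destruct C2fss as [Cfss [fsst [fsss [Hd6 [C1fsst _]]]]].
  assert (S1 : forall t s, Rabs t < eps -> fts t s = fst' t s).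
  { apply (schwarz_strip eps f ft fs fts fst').
    - intros t s Ht; apply (Hd t s Ht).
    - intros t s Ht; apply (Hd t s Ht).
    - intros t s Ht; apply (Hd2 t s Ht).
    - intros t s Ht; apply (Hd3 t s Ht).
    - auto. - auto. }
  assert (S2 : forall t s, Rabs t < eps -> fsts t s = fsst t s).
  { apply (schwarz_strip eps fs fst' fss fsts fsst).
    - intros t s Ht; apply (Hd3 t s Ht).
    - intros t s Ht; apply (Hd3 t s Ht).
    - intros t s Ht; apply (Hd5 t s Ht).
    - intros t s Ht; apply (Hd6 t s Ht).
    - apply (Ck2_cont 1); auto. - apply (Ck2_cont 1); auto. }
  assert (H0 : Rabs 0 < eps) by (rewrite Rabs_R0; auto).
  exists ft, fs, fts, fss, ftt, (fun s => fsts 0 s). split; [|split; [|split; [|split; [|split; [|split; [|split; [|split]]]]]]].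
  - intros t s Ht; apply (Hd t s Ht).
  - intros t s Ht; apply (Hd t s Ht).
  - intros t s Ht; apply (Hd2 t s Ht).
  - intros t s Ht. rewrite S1 by auto. apply (Hd3 t s Ht).
  - intros t s Ht; apply (Hd3 t s Ht).
  - intros t s Ht; apply (Hd2 t s Ht).
  - intros s. eapply is_derive_ext; [|apply (Hd5 0 s H0)]. intros u; simpl. rewrite S1; auto.
  - intros s. rewrite S2 by auto. apply (Hd6 0 s H0).
  - auto.
Qed.

Lemma abs_sin_le x : Rabs (sin x) <= Rabs x.
Proof.
  destruct (MVT_abs sin cos 0 x) as [c [Hc _]].
  { intros c _. apply derivable_pt_lim_sin. }
  rewrite sin_0, !Rminus_0_r in Hc. rewrite Hc.
  pose proof (COS_bound c). assert (Rabs (cos c) <= 1) by (apply Rabs_le; lra).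
  pose proof (Rabs_pos x). nra.
Qed.

Lemma Zlat (m n : Z) : (m, n) <> (0%Z, 0%Z) -> (4 <= (2*m+n)*(2*m+n) + 3*(n*n))%Z.
Proof.
  intros H. destruct (Z.eq_dec n 0) as [->|Hn].
  - assert (m <> 0%Z) by (intro; subst; apply H; auto). nia.
  - destruct (Z_le_gt_dec 2 (Z.abs n)). nia.
    assert (n = 1 \/ n = -1)%Z by lia. destruct H0; subst.
    + assert (2*m+1 <> 0)%Z by lia. nia.
    + assert (2*m+-1 <> 0)%Z by lia. nia.
Qed.

Lemma lat_norm a m n : 0 < a -> (m, n) <> (0%Z, 0%Z) ->
  4 * a^2 <= (fst (lat_pt a m n))^2 + (snd (lat_pt a m n))^2.
Proof.
  intros Ha H. apply Zlat in H. apply IZR_le in H.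
  rewrite plus_IZR, !mult_IZR, plus_IZR, mult_IZR in H.
  unfold lat_pt; simpl.
  assert (S3 : sqrt 3 * sqrt 3 = 3) by (apply sqrt_sqrt; lra).
  replace ((2 * a * IZR m + a * IZR n) ^ 2 + (a * sqrt 3 * IZR n) ^ 2)
     with (a^2 * ((2 * IZR m + IZR n) * (2 * IZR m + IZR n) + 3 * (IZR n * IZR n))).
  2:{ replace 3 with (sqrt 3 * sqrt 3) at 1 by auto. ring. }
  assert (0 < a^2) by nra. simpl in H. nra.
Qed.

Lemma latdist_small a x y : 0 < a -> x^2 + y^2 < a^2 -> latdist a x y = sqrt (x^2 + y^2).
Proof.
  intros Ha Hr. unfold latdist.
  rewrite (is_glb_Rbar_unique _ (Finite (sqrt (x^2+y^2)))); [reflexivity|].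
  split.
  - intros d [m [n ->]]. change (sqrt (x^2+y^2) <= sqrt ((x - fst (lat_pt a m n))^2 + (y - snd (lat_pt a m n))^2)). apply sqrt_le_1_alt.
    destruct (Z.eq_dec m 0) as [Em|Em]; destruct (Z.eq_dec n 0) as [En|En].
    + subst. unfold lat_pt; simpl. right; ring.
    + assert (Hmn : (m, n) <> (0%Z, 0%Z)) by congruence.
      pose proof (lat_norm a m n Ha Hmn).
      set (u := fst (lat_pt a m n)) in *. set (v := snd (lat_pt a m n)) in *.
      clearbody u v. assert (0 <= (u - 2*x)^2 + (v - 2*y)^2) by (apply Rplus_le_le_0_compat; apply pow2_ge_0). nra.
    + assert (Hmn : (m, n) <> (0%Z, 0%Z)) by congruence.
      pose proof (lat_norm a m n Ha Hmn).
      set (u := fst (lat_pt a m n)) in *. set (v := snd (lat_pt a m n)) in *.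
      clearbody u v. assert (0 <= (u - 2*x)^2 + (v - 2*y)^2) by (apply Rplus_le_le_0_compat; apply pow2_ge_0). nra.
    + assert (Hmn : (m, n) <> (0%Z, 0%Z)) by congruence.
      pose proof (lat_norm a m n Ha Hmn).
      set (u := fst (lat_pt a m n)) in *. set (v := snd (lat_pt a m n)) in *.
      clearbody u v. assert (0 <= (u - 2*x)^2 + (v - 2*y)^2) by (apply Rplus_le_le_0_compat; apply pow2_ge_0). nra.
  - intros b Hb. apply Hb. exists 0%Z, 0%Z. unfold lat_pt; simpl. f_equal; ring.
Qed.

Definition kfun (w : R) : R := if Req_EM_T w 0 then -2 else - sin (2 * sqrt w) / sqrt w.
Definition Kf (x y : R) : R := kfun (x^2 + y^2).

Lemma is_derive_eq (f : R -> R) (x l l' : R) : is_derive f x l -> l = l' -> is_derive f x l'.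
Proof. intros H ->; auto. Qed.

Lemma squeeze_deriv (f g : R -> R) t0 al :
  f t0 = al -> g t0 = 0 -> (forall t, Rabs (f t - al) <= g t) -> is_derive g t0 0 ->
  is_derive f t0 0.
Proof.
  intros Hf Hg Hb Hd. apply is_derive_Reals. apply is_derive_Reals in Hd.
  intros e He. destruct (Hd e He) as [d Hdd]. exists d. intros h Hh Hhd.
  specialize (Hdd h Hh Hhd). rewrite Hg in Hdd. rewrite Hf.
  assert (Ez : forall z, Rabs ((z - 0) / h - 0) = Rabs z * / Rabs h).
  { intros z. unfold Rdiv. rewrite !Rminus_0_r, Rabs_mult, Rabs_inv. auto. }
  assert (Ez2 : forall z, Rabs ((z - al) / h - 0) = Rabs (z - al) * / Rabs h).
  { intros z. unfold Rdiv. rewrite !Rminus_0_r, Rabs_mult, Rabs_inv. auto. }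
  rewrite Ez in Hdd. rewrite Ez2.
  specialize (Hb (t0 + h)).
  assert (0 <= / Rabs h) by (apply Rlt_le, Rinv_0_lt_compat, Rabs_pos_lt; auto).
  assert (g (t0 + h) <= Rabs (g (t0 + h))) by apply Rle_abs.
  apply Rle_lt_trans with (2 := Hdd). apply Rmult_le_compat_r; lra.
Qed.

Lemma is_derive_sq2 (P Q : R -> R) t0 p q :
  is_derive P t0 p -> is_derive Q t0 q ->
  is_derive (fun t => P t ^ 2 + Q t ^ 2) t0 (2 * P t0 * p + 2 * Q t0 * q).
Proof.
  intros HP HQ. eapply is_derive_eq.
  - apply (is_derive_plus (fun t => P t ^ 2) (fun t => Q t ^ 2)); apply is_derive_pow; eauto.
  - simpl. unfold plus; simpl. ring.
Qed.

Lemma chainG (P Q : R -> R) t0 p q :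
  is_derive P t0 p -> is_derive Q t0 q ->
  is_derive (fun t => cos (sqrt (P t ^ 2 + Q t ^ 2)) ^ 2) t0
     (Kf (P t0) (Q t0) * (P t0 * p + Q t0 * q)).
Proof.
  intros HP HQ. pose proof (is_derive_sq2 P Q t0 p q HP HQ) as Hw.
  set (w0 := P t0 ^ 2 + Q t0 ^ 2).
  assert (Hw0 : 0 <= w0) by (unfold w0; nra).
  destruct (Req_dec w0 0) as [Hz|Hnz].
  - assert (HP0 : P t0 = 0) by (unfold w0 in Hz; nra).
    assert (HQ0 : Q t0 = 0) by (unfold w0 in Hz; nra).
    rewrite HP0, HQ0. replace (Kf 0 0 * (0 * p + 0 * q)) with 0 by ring.
    apply (squeeze_deriv _ (fun t => P t ^ 2 + Q t ^ 2) t0 1).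
    + rewrite HP0, HQ0. replace (0 ^ 2 + 0 ^ 2) with 0 by ring. rewrite sqrt_0, cos_0. ring.
    + rewrite HP0, HQ0. ring.
    + intros t. set (w := P t ^ 2 + Q t ^ 2).
      assert (0 <= w) by (unfold w; nra).
      pose proof (sin2_cos2 (sqrt w)). unfold Rsqr in H0.
      pose proof (abs_sin_le (sqrt w)).
      rewrite (Rabs_pos_eq (sqrt w)) in H1 by apply sqrt_pos.
      pose proof (sqrt_sqrt w H).
      assert (Rabs (sin (sqrt w)) * Rabs (sin (sqrt w)) <= sqrt w * sqrt w).
      { apply Rmult_le_compat; auto; apply Rabs_pos. }
      rewrite <- Rabs_mult in H3. rewrite Rabs_pos_eq in H3 by nra.
      rewrite Rabs_left1 by nra. nra.
    + eapply is_derive_eq; [exact Hw|]. rewrite HP0, HQ0. replace (2 * 0 * p + 2 * 0 * q) with 0 by ring. reflexivity.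
  - assert (Hpos : 0 < w0) by lra.
    assert (Hs : 0 < sqrt w0) by (apply sqrt_lt_R0; auto).
    eapply is_derive_eq.
    + apply (is_derive_pow (fun t => cos (sqrt (P t ^ 2 + Q t ^ 2))) 2).
      apply (is_derive_comp cos (fun t => sqrt (P t ^ 2 + Q t ^ 2))).
      * apply is_derive_cos.
      * apply is_derive_sqrt; [exact Hw | exact Hpos].
    + unfold Kf, kfun. fold w0. destruct (Req_EM_T w0 0) as [E|_]; [lra|].
      rewrite sin_2a. simpl. unfold scal; simpl; unfold mult; simpl.
      field. lra.
Qed.

Lemma deriv_cont_eps (f : R -> R) t0 l : is_derive f t0 l ->
  forall e, 0 < e -> exists d, 0 < d /\ forall h, Rabs h < d -> Rabs (f (t0 + h) - f t0) < e.
Proof.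
  intros Hd e He. apply is_derive_Reals in Hd.
  destruct (Hd 1 Rlt_0_1) as [[d1 Hd1] H1]. simpl in H1.
  assert (Hl : 0 < Rabs l + 1) by (pose proof (Rabs_pos l); lra).
  exists (Rmin d1 (e / (Rabs l + 1))). split.
  { apply Rmin_pos; auto. apply Rdiv_lt_0_compat; auto. }
  intros h Hh. destruct (Req_dec h 0) as [->|Hh0].
  - rewrite Rplus_0_r, Rminus_diag, Rabs_R0; auto.
  - assert (Hh1 : Rabs h < d1) by (eapply Rlt_le_trans; [exact Hh|apply Rmin_l]).
    assert (Hh2 : Rabs h < e / (Rabs l + 1)) by (eapply Rlt_le_trans; [exact Hh|apply Rmin_r]).
    specialize (H1 h Hh0 Hh1).
    set (D := f (t0 + h) - f t0) in *.
    assert (HD : D = ((D / h - l) + l) * h) by (field; auto).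
    rewrite HD, Rabs_mult.
    pose proof (Rabs_triang (D / h - l) l).
    assert (Rabs (D / h - l + l) < Rabs l + 1) by lra.
    assert (0 < Rabs h) by (apply Rabs_pos_lt; auto).
    apply Rlt_le_trans with ((Rabs l + 1) * Rabs h).
    + apply Rmult_lt_compat_r; auto.
    + assert (Hh3 : (Rabs l + 1) * Rabs h <= (Rabs l + 1) * (e / (Rabs l + 1)))
        by (apply Rmult_le_compat_l; lra).
      replace ((Rabs l + 1) * (e / (Rabs l + 1))) with e in Hh3 by (field; lra). lra.
Qed.

Lemma loc_lt_of_deriv (h : R -> R) x0 l b : is_derive h x0 l -> h x0 < b ->
  locally x0 (fun u => h u < b).
Proof.
  intros Hd Hb. destruct (deriv_cont_eps h x0 l Hd (b - h x0)) as [d [Hd0 Hdd]]; [lra|].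
  exists (mkposreal d Hd0). intros u Hu. simpl in Hu.
  unfold ball in Hu; simpl in Hu; unfold AbsRing_ball, abs, minus, plus, opp in Hu; simpl in Hu.
  specialize (Hdd (u - x0) Hu). rewrite (Rplus_minus x0 u) in Hdd.
  apply Rabs_def2 in Hdd. lra.
Qed.

Lemma hF_small a x y : 0 < a -> x^2 + y^2 < a^2 -> hF a x y = cos (sqrt (x^2 + y^2)) ^ 2.
Proof. intros Ha H. unfold hF. rewrite latdist_small; auto. Qed.

Lemma is_derive_id' x : is_derive (fun u : R => u) x 1.
Proof. apply (is_derive_id (K:=R_AbsRing)). Qed.

Lemma is_derive_const' (c x : R) : is_derive (fun _ : R => c) x 0.
Proof. apply is_derive_Reals, derivable_pt_lim_const. Qed.

Lemma dFx_val a x y : 0 < a -> x^2 + y^2 < a^2 -> dFx a x y = Kf x y * x.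
Proof.
  intros Ha H. unfold dFx. apply is_derive_unique.
  pose proof (chainG (fun u => u) (fun _ => y) x 1 0 (is_derive_id' x) (is_derive_const' y x)) as HG.
  simpl in HG.
  eapply is_derive_ext_loc; [|eapply is_derive_eq; [exact HG|ring]].
  pose proof (is_derive_sq2 (fun u => u) (fun _ => y) x 1 0 (is_derive_id' x) (is_derive_const' y x)) as Hw.
  eapply filter_imp; [|exact (loc_lt_of_deriv _ x _ (a^2) Hw H)].
  intros u Hu. simpl in Hu. rewrite hF_small; auto.
Qed.

Lemma dFy_val a x y : 0 < a -> x^2 + y^2 < a^2 -> dFy a x y = Kf x y * y.
Proof.
  intros Ha H. unfold dFy. apply is_derive_unique.
  pose proof (chainG (fun _ => x) (fun u => u) y 0 1 (is_derive_const' x y) (is_derive_id' y)) as HG.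
  simpl in HG.
  eapply is_derive_ext_loc; [|eapply is_derive_eq; [exact HG|ring]].
  pose proof (is_derive_sq2 (fun _ => x) (fun u => u) y 0 1 (is_derive_const' x y) (is_derive_id' y)) as Hw.
  eapply filter_imp; [|exact (loc_lt_of_deriv _ y _ (a^2) Hw H)].
  intros u Hu. simpl in Hu. rewrite hF_small; auto.
Qed.

Lemma chain_hF a (P Q : R -> R) t0 p q : 0 < a ->
  is_derive P t0 p -> is_derive Q t0 q -> P t0 ^ 2 + Q t0 ^ 2 < a ^ 2 ->
  is_derive (fun t => hF a (P t) (Q t)) t0
    (dFx a (P t0) (Q t0) * p + dFy a (P t0) (Q t0) * q).
Proof.
  intros Ha HP HQ Hr. rewrite dFx_val, dFy_val by auto.
  eapply is_derive_ext_loc; [|eapply is_derive_eq; [exact (chainG P Q t0 p q HP HQ)|ring]].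
  eapply filter_imp; [|exact (loc_lt_of_deriv _ t0 _ (a^2) (is_derive_sq2 P Q t0 p q HP HQ) Hr)].
  intros u Hu. simpl in Hu. rewrite hF_small; auto.
Qed.

Lemma prod_deriv (A B : R -> R) t0 p : A t0 = 0 -> is_derive A t0 p ->
  (forall e, 0 < e -> exists d, 0 < d /\ forall h, Rabs h < d -> Rabs (B (t0 + h) - B t0) < e) ->
  is_derive (fun t => B t * A t) t0 (B t0 * p).
Proof.
  intros HA0 HA HB. apply is_derive_Reals. apply is_derive_Reals in HA.
  intros e He.
  set (B0 := B t0).
  assert (Hp1 : 0 < Rabs p + 1) by (pose proof (Rabs_pos p); lra).
  assert (Hb1 : 0 < Rabs B0 + 1) by (pose proof (Rabs_pos B0); lra).
  set (e1 := Rmin 1 (e / (2 * (Rabs p + 1)))).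
  assert (He1 : 0 < e1) by (apply Rmin_pos; [lra| apply Rdiv_lt_0_compat; lra]).
  assert (He1a : e1 <= 1) by apply Rmin_l.
  assert (He1b : e1 <= e / (2 * (Rabs p + 1))) by apply Rmin_r.
  destruct (HB e1 He1) as [d1 [Hd1 HB1]].
  set (e2 := e / (2 * (Rabs B0 + 1))).
  assert (He2 : 0 < e2) by (apply Rdiv_lt_0_compat; lra).
  destruct (HA e2 He2) as [[d2 Hd2] HA2]. simpl in HA2.
  assert (Hd : 0 < Rmin d1 d2) by (apply Rmin_pos; auto).
  exists (mkposreal _ Hd). intros h Hh0 Hh. simpl in Hh.
  assert (Hh1 : Rabs h < d1) by (eapply Rlt_le_trans; [exact Hh|apply Rmin_l]).
  assert (Hh2 : Rabs h < d2) by (eapply Rlt_le_trans; [exact Hh|apply Rmin_r]).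
  specialize (HB1 h Hh1). specialize (HA2 h Hh0 Hh2).
  rewrite HA0, Rminus_0_r in HA2. rewrite HA0, Rmult_0_r, Rminus_0_r. fold B0.
  set (q := A (t0 + h) / h) in *. set (B1 := B (t0 + h)) in *.
  replace (B1 * A (t0 + h) / h - B0 * p) with (B1 * (q - p) + (B1 - B0) * p)
    by (unfold q; field; auto).
  fold B0 in HB1. clearbody q B1 B0 e1.
  pose proof (Rabs_triang (B1 * (q - p)) ((B1 - B0) * p)).
  rewrite !Rabs_mult in H.
  assert (HB1a : Rabs B1 <= Rabs B0 + 1).
  { pose proof (Rabs_triang_inv B1 B0). lra. }
  assert (T1 : Rabs B1 * Rabs (q - p) <= (Rabs B0 + 1) * e2).
  { apply Rmult_le_compat; try apply Rabs_pos; lra. }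
  assert (T2 : Rabs (B1 - B0) * Rabs p <= e1 * Rabs p).
  { apply Rmult_le_compat_r; [apply Rabs_pos|lra]. }
  assert (E2 : (Rabs B0 + 1) * e2 = e / 2) by (unfold e2; field; lra).
  assert (T3 : e1 * Rabs p <= e / (2 * (Rabs p + 1)) * Rabs p)
    by (apply Rmult_le_compat_r; [apply Rabs_pos|lra]).
  assert (T4 : e / (2 * (Rabs p + 1)) * Rabs p < e / 2).
  { apply Rlt_le_trans with (e / (2 * (Rabs p + 1)) * (Rabs p + 1)).
    - apply Rmult_lt_compat_l; [apply Rdiv_lt_0_compat; lra|lra].
    - right; field; lra. }
  lra.
Qed.

Lemma kfun_cont e : 0 < e -> exists d, 0 < d /\ forall w, 0 <= w < d -> Rabs (kfun w + 2) < e.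
Proof.
  intros He. pose proof (derivable_pt_lim_sin 0) as Hs. rewrite cos_0 in Hs.
  destruct (Hs (e/2) ltac:(lra)) as [[d Hd] Hdd]. simpl in Hdd.
  exists ((d/2)^2). split; [nra|]. intros w [Hw0 Hw1].
  unfold kfun. destruct (Req_EM_T w 0) as [E|E].
  - replace (-2 + 2) with 0 by ring. rewrite Rabs_R0; auto.
  - assert (Hsw : 0 < sqrt w) by (apply sqrt_lt_R0; lra).
    assert (Hsd : sqrt w < d / 2).
    { rewrite <- (sqrt_pow2 (d/2)) by lra. apply sqrt_lt_1_alt; lra. }
    specialize (Hdd (2 * sqrt w) ltac:(lra) ltac:(rewrite Rabs_pos_eq; lra)).
    rewrite Rplus_0_l, sin_0, Rminus_0_r in Hdd.
    replace (- sin (2 * sqrt w) / sqrt w + 2) with ((-2) * (sin (2 * sqrt w) / (2 * sqrt w) - 1))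
      by (field; lra).
    rewrite Rabs_mult. replace (Rabs (-2)) with 2 by (rewrite Rabs_left; lra). lra.
Qed.

Lemma dFx_curve a (P Q : R -> R) t0 p q : 0 < a ->
  is_derive P t0 p -> is_derive Q t0 q -> P t0 = 0 -> Q t0 = 0 ->
  is_derive (fun t => dFx a (P t) (Q t)) t0 (-2 * p) /\
  is_derive (fun t => dFy a (P t) (Q t)) t0 (-2 * q).
Proof.
  intros Ha HP HQ HP0 HQ0.
  pose proof (is_derive_sq2 P Q t0 p q HP HQ) as Hw.
  assert (Hw0 : P t0 ^ 2 + Q t0 ^ 2 = 0) by (rewrite HP0, HQ0; ring).
  assert (Hloc : locally t0 (fun u => P u ^ 2 + Q u ^ 2 < a ^ 2)).
  { apply (loc_lt_of_deriv _ t0 _ _ Hw). rewrite Hw0. nra. }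
  assert (HK : forall e, 0 < e -> exists d, 0 < d /\ forall h, Rabs h < d ->
       Rabs (Kf (P (t0 + h)) (Q (t0 + h)) - Kf (P t0) (Q t0)) < e).
  { intros e He. destruct (kfun_cont e He) as [d1 [Hd1 Hk]].
    destruct (deriv_cont_eps _ t0 _ Hw d1 Hd1) as [d2 [Hd2 Hc]].
    exists d2. split; auto. intros h Hh. specialize (Hc h Hh). rewrite Hw0, Rminus_0_r in Hc.
    unfold Kf. rewrite Hw0. unfold kfun at 2. destruct (Req_EM_T 0 0) as [_|E]; [|lra].
    replace (kfun (P (t0 + h) ^ 2 + Q (t0 + h) ^ 2) - -2)
       with (kfun (P (t0 + h) ^ 2 + Q (t0 + h) ^ 2) + 2) by ring.
    apply Hk. split; [nra|]. apply Rabs_def2 in Hc. lra. }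
  assert (HK0 : Kf (P t0) (Q t0) = -2).
  { unfold Kf, kfun. rewrite Hw0. destruct (Req_EM_T 0 0); lra. }
  split.
  - eapply is_derive_ext_loc; [|eapply is_derive_eq; [exact (prod_deriv P (fun t => Kf (P t) (Q t)) t0 p HP0 HP HK)|]].
    + eapply filter_imp; [|exact Hloc]. intros u Hu. simpl. rewrite dFx_val by (exact Hu || auto). ring.
    + cbv beta. rewrite HK0; ring.
  - eapply is_derive_ext_loc; [|eapply is_derive_eq; [exact (prod_deriv Q (fun t => Kf (P t) (Q t)) t0 q HQ0 HQ HK)|]].
    + eapply filter_imp; [|exact Hloc]. intros u Hu. simpl. rewrite dFy_val by (exact Hu || auto). ring.
    + cbv beta. rewrite HK0; ring.
Qed.

Lemma hF_pos a x y : 0 < a -> x^2 + y^2 < a^2 -> x^2 + y^2 < 1 -> 0 < hF a x y.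
Proof.
  intros Ha H1 H2. rewrite hF_small by auto.
  assert (0 <= sqrt (x^2+y^2)) by apply sqrt_pos.
  assert (sqrt (x^2+y^2) < 1).
  { rewrite <- sqrt_1. apply sqrt_lt_1_alt. split; [nra|auto]. }
  pose proof PI2_1.
  assert (0 < cos (sqrt (x^2+y^2))) by (apply cos_gt_0; lra). nra.
Qed.

Lemma hF_00 a : 0 < a -> hF a 0 0 = 1.
Proof.
  intros Ha. rewrite hF_small by nra. replace (0^2+0^2) with 0 by ring.
  rewrite sqrt_0, cos_0. ring.
Qed.

Lemma close_unif (f : R -> R -> R) eps eta : 0 < eps -> 0 < eta ->
  (forall t s, Rabs t < eps -> continuous (fun p : R * R => f (fst p) (snd p)) (t, s)) ->
  (forall s, 0 <= s <= 1 -> f 0 s = 0) ->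
  exists d, 0 < d /\ forall t s, Rabs t < d -> 0 <= s <= 1 -> Rabs (f t s) < eta.
Proof.
  intros He Heta Hc H0.
  destruct (uniform_continuity_2d_1d' f 0 1 0) with (eps := mkposreal eta Heta) as [d Hd].
  { intros x Hx. apply continuity_2d_pt_filterlim. apply Hc. rewrite Rabs_R0; auto. }
  exists d. split; [apply cond_pos|]. intros t s Ht Hs.
  apply Rabs_def2 in Ht.
  specialize (Hd s 0 s t Hs ltac:(lra) Hs ltac:(lra) ltac:(rewrite Rminus_diag, Rabs_R0; apply cond_pos)).
  simpl in Hd. rewrite H0 in Hd by auto. rewrite Rminus_0_r in Hd. auto.
Qed.

Lemma d_mult (f g : R -> R) (x a b : R) : is_derive f x a -> is_derive g x b ->
  is_derive (fun t => f t * g t) x (a * g x + f x * b).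
Proof.
  intros Hf Hg. eapply is_derive_eq; [apply (is_derive_mult f g x a b Hf Hg)|].
  - simpl. intros; apply Rmult_comm.
  - unfold plus, mult; simpl. ring.
Qed.

Lemma d_plus (f g : R -> R) (x a b : R) : is_derive f x a -> is_derive g x b ->
  is_derive (fun t => f t + g t) x (a + b).
Proof. intros Hf Hg. apply (is_derive_plus f g x a b Hf Hg). Qed.

Lemma d_minus (f g : R -> R) (x a b : R) : is_derive f x a -> is_derive g x b ->
  is_derive (fun t => f t - g t) x (a - b).
Proof. intros Hf Hg. apply (is_derive_minus f g x a b Hf Hg). Qed.

Lemma d_sq (f : R -> R) (x a : R) : is_derive f x a ->
  is_derive (fun t => f t ^ 2) x (2 * f x * a).
Proof.
  intros Hf. eapply is_derive_ext; [|eapply is_derive_eq; [apply (d_mult f f x a a Hf Hf)|]].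
  - intros t; simpl; ring.
  - ring.
Qed.

Lemma d_const (k x : R) : is_derive (fun _ : R => k) x 0.
Proof. apply is_derive_Reals, derivable_pt_lim_const. Qed.

Lemma d_id (x : R) : is_derive (fun u : R => u) x 1.
Proof. apply (is_derive_id (K:=R_AbsRing)). Qed.

Lemma d_scal (f : R -> R) (k x a : R) : is_derive f x a -> is_derive (fun t => k * f t) x (k * a).
Proof. intros; apply is_derive_scal; auto. Qed.

Lemma d_cos_lin (c s : R) : is_derive (fun s => cos (c * s)) s (- c * sin (c * s)).
Proof.
  eapply is_derive_eq.
  - apply (is_derive_comp cos (fun s => c * s)); [apply is_derive_cos|].
    apply d_scal, d_id.
  - unfold scal; simpl; unfold mult; simpl. ring.
Qed.

Lemma d_sin_lin (c s : R) : is_derive (fun s => sin (c * s)) s (c * cos (c * s)).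
Proof.
  eapply is_derive_eq.
  - apply (is_derive_comp sin (fun s => c * s)); [apply is_derive_sin|].
    apply d_scal, d_id.
  - unfold scal; simpl; unfold mult; simpl. ring.
Qed.

Lemma osc (J J1 J2 : R -> R) (c : R) : c <> 0 ->
  (forall s, 0 <= s <= 1 -> is_derive J s (J1 s) /\ is_derive J1 s (J2 s) /\ J2 s = - c^2 * J s) ->
  J 1 = J 0 * cos c + (J1 0 / c) * sin c /\ J1 1 / c = - J 0 * sin c + (J1 0 / c) * cos c.
Proof.
  intros Hc H.
  pose (P := fun s => J s * cos (c * s) - / c * (J1 s * sin (c * s))).
  pose (Q := fun s => J s * sin (c * s) + / c * (J1 s * cos (c * s))).
  assert (HP : P 0 = P 1).
  { apply (eq_is_derive P 0 1); [|lra]. intros s Hs. destruct (H s Hs) as [H1 [H2 H3]].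
    eapply is_derive_eq.
    - apply d_minus; [apply d_mult; [exact H1|apply d_cos_lin]|].
      apply d_scal. apply d_mult; [exact H2|apply d_sin_lin].
    - rewrite H3. simpl. unfold zero; simpl. field. auto. }
  assert (HQ : Q 0 = Q 1).
  { apply (eq_is_derive Q 0 1); [|lra]. intros s Hs. destruct (H s Hs) as [H1 [H2 H3]].
    eapply is_derive_eq.
    - apply d_plus; [apply d_mult; [exact H1|apply d_sin_lin]|].
      apply d_scal. apply d_mult; [exact H2|apply d_cos_lin].
    - rewrite H3. simpl. unfold zero; simpl. field. auto. }
  unfold P, Q in HP, HQ. rewrite !Rmult_0_r, cos_0, sin_0, !Rmult_1_r in HP, HQ.
  pose proof (sin2_cos2 c) as Hsc. unfold Rsqr in Hsc.
  set (A := J 1) in *. set (B := J1 1) in *. set (cc := cos c) in *. set (ss := sin c) in *.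
  split.
  - transitivity ((A * cc - / c * (B * ss)) * cc + (A * ss + / c * (B * cc)) * ss).
    + replace A with (A * (ss * ss + cc * cc)) at 1 by (rewrite Hsc; ring). field. auto.
    + rewrite <- HP, <- HQ. field. auto.
  - transitivity (- (A * cc - / c * (B * ss)) * ss + (A * ss + / c * (B * cc)) * cc).
    + replace (B / c) with (B / c * (ss * ss + cc * cc)) by (rewrite Hsc; ring). field. auto.
    + rewrite <- HP, <- HQ. field. auto.
Qed.

Lemma final_alg (u v Bx By cs sn ct st : R) :
  0 < sn -> ct < cs -> sn * sn + cs * cs = 1 -> st * st + ct * ct = 1 ->
  (u, v) <> (0, 0) ->
  u * cs + Bx * sn = u * ct - v * st -> v * cs + By * sn = u * st + v * ct ->
  0 < (u * cs + Bx * sn) * (- u * sn + Bx * cs) + (v * cs + By * sn) * (- v * sn + By * cs)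
      - (u * Bx + v * By).
Proof.
  intros Hsn Hc Hsc Hst Huv Hx Hy.
  set (wx := u * cs + Bx * sn) in *. set (wy := v * cs + By * sn) in *.
  assert (HA : 0 < u * u + v * v).
  { destruct (Req_dec u 0); destruct (Req_dec v 0); subst; try nra. exfalso; apply Huv; auto. }
  assert (E1 : sn * (wx * (- u * sn + Bx * cs) + wy * (- v * sn + By * cs) - (u * Bx + v * By))
     = cs * (wx * wx + wy * wy) - 2 * (wx * u + wy * v) + cs * (u * u + v * v)).
  { unfold wx, wy. replace (sn * sn) with (1 - cs * cs) by lra. ring_simplify.
    replace (sn^2) with (1 - cs^2) by (simpl; lra). ring_simplify.
    replace (sn^3) with (sn * (1 - cs^2)) by (simpl; nra). ring. }
  assert (E2 : wx * wx + wy * wy = u * u + v * v).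
  { rewrite Hx, Hy. replace (u*u+v*v) with ((u*u+v*v)*(st*st+ct*ct)) by (rewrite Hst; ring). ring. }
  assert (E3 : wx * u + wy * v = ct * (u * u + v * v)).
  { rewrite Hx, Hy. ring. }
  rewrite E2, E3 in E1.
  set (Z := wx * (- u * sn + Bx * cs) + wy * (- v * sn + By * cs) - (u * Bx + v * By)) in *.
  clearbody Z. nra.
Qed.

Theorem mainTheorem9 (a c z0 eps : R) (X Y Z : R -> R -> R) :
  0 < a -> 2 * a / sqrt 3 < PI / 2 ->
  0 < c < 2 * PI / 3 ->
  0 < eps ->
  smooth2 eps X -> smooth2 eps Y -> smooth2 eps Z ->
  (forall s, 0 <= s <= 1 -> X 0 s = 0 /\ Y 0 s = 0 /\ Z 0 s = z0 + c * s) ->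
  (forall t, Rabs t < eps ->
     is_h_geodesic a (X t) (Y t) (Z t) /\
     (X t 1, Y t 1, Z t 1) = phi c (X t 0, Y t 0, Z t 0)) ->
  (exists u v : R, (u, v) <> (0, 0) /\
     is_derive (fun t => X t 0) 0 u /\ is_derive (fun t => Y t 0) 0 v /\
     is_derive (fun t => Z t 0) 0 0) ->
  exists (L1 : R -> R) (d2 : R),
    (exists delta, 0 < delta /\ forall t, Rabs t < delta ->
        is_derive (fun t' => Lh a (X t') (Y t') (Z t')) t (L1 t)) /\
    is_derive L1 0 d2 /\ 0 < d2.
Proof.
  intros Ha Hapi [Hc1 Hc2] Heps SX SY SZ H0 Hgeo [u [v [Huv [Hu [Hv Hw]]]]].
  destruct (smooth_facts eps X Heps SX) as [xt [xs [xts [xss [xtt [x3 [HXt [HXs [HXts [HXst [HXss [HXtt [HX3a [HX3b CX]]]]]]]]]]]]]].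
  destruct (smooth_facts eps Y Heps SY) as [yt [ys [yts [yss [ytt [y3 [HYt [HYs [HYts [HYst [HYss [HYtt [HY3a [HY3b CY]]]]]]]]]]]]]].
  destruct (smooth_facts eps Z Heps SZ) as [zt [zs [zts [zss [ztt [z3 [HZt [HZs [HZts [HZst [HZss [HZtt [HZ3a [HZ3b CZ]]]]]]]]]]]]]].
  assert (H0e : Rabs 0 < eps) by (rewrite Rabs_R0; auto).
  assert (X0 : forall s, 0 <= s <= 1 -> X 0 s = 0) by (intros s Hs; apply H0; auto).
  assert (Y0 : forall s, 0 <= s <= 1 -> Y 0 s = 0) by (intros s Hs; apply H0; auto).
  assert (Z0 : forall s, 0 <= s <= 1 -> Z 0 s = z0 + c * s) by (intros s Hs; apply H0; auto).
  assert (xs0 : forall s, 0 <= s <= 1 -> xs 0 s = 0).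
  { intros s Hs. apply (deriv_agree01 (X 0) (fun _ => 0) s); [auto | intros; apply X0; auto | apply HXs; auto | apply d_const]. }
  assert (ys0 : forall s, 0 <= s <= 1 -> ys 0 s = 0).
  { intros s Hs. apply (deriv_agree01 (Y 0) (fun _ => 0) s); [auto | intros; apply Y0; auto | apply HYs; auto | apply d_const]. }
  assert (zs0 : forall s, 0 <= s <= 1 -> zs 0 s = c).
  { intros s Hs. apply (deriv_agree01 (Z 0) (fun s => z0 + c * s) s); [auto | intros; apply Z0; auto | apply HZs; auto |].
    eapply is_derive_eq; [apply d_plus; [apply d_const | apply d_scal, d_id]|ring]. }
  assert (ODE : forall t s, Rabs t < eps -> 0 <= s <= 1 ->
     xss t s = / 2 * dFx a (X t s) (Y t s) * (zs t s) ^ 2 /\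
     yss t s = / 2 * dFy a (X t s) (Y t s) * (zs t s) ^ 2 /\
     zss t s = - (dFx a (X t s) (Y t s) * xs t s + dFy a (X t s) (Y t s) * ys t s) * zs t s
               / hF a (X t s) (Y t s)).
  { intros t s Ht Hs. destruct (Hgeo t Ht) as [[X1 [Y1 [Z1 [X2 [Y2 [Z2 HG]]]]]] _].
    assert (EX1 : forall r, 0 <= r <= 1 -> X1 r = xs t r).
    { intros r Hr. destruct (HG r Hr) as [_ [HX1 _]]. apply is_derive_unique in HX1.
      rewrite <- HX1. apply is_derive_unique. apply HXs; auto. }
    assert (EY1 : forall r, 0 <= r <= 1 -> Y1 r = ys t r).
    { intros r Hr. destruct (HG r Hr) as [_ [_ [HY1 _]]]. apply is_derive_unique in HY1.
      rewrite <- HY1. apply is_derive_unique. apply HYs; auto. }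
    assert (EZ1 : forall r, 0 <= r <= 1 -> Z1 r = zs t r).
    { intros r Hr. destruct (HG r Hr) as [_ [_ [_ [HZ1 _]]]]. apply is_derive_unique in HZ1.
      rewrite <- HZ1. apply is_derive_unique. apply HZs; auto. }
    destruct (HG s Hs) as [_ [_ [_ [_ [HX2 [HY2 [HZ2 [E1 [E2 E3]]]]]]]]].
    assert (F1 : xss t s = X2 s).
    { apply (deriv_agree01 (fun r => xs t r) X1 s); [auto| intros; rewrite EX1; auto | apply HXss; auto | auto]. }
    assert (F2 : yss t s = Y2 s).
    { apply (deriv_agree01 (fun r => ys t r) Y1 s); [auto| intros; rewrite EY1; auto | apply HYss; auto | auto]. }
    assert (F3 : zss t s = Z2 s).
    { apply (deriv_agree01 (fun r => zs t r) Z1 s); [auto| intros; rewrite EZ1; auto | apply HZss; auto | auto]. }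
    rewrite F1, F2, F3, E1, E2, E3, EX1, EY1, EZ1 by auto. auto. }
  set (eta := Rmin a 1 / 2).
  assert (Heta : 0 < eta) by (unfold eta; apply Rdiv_lt_0_compat; [apply Rmin_pos; lra|lra]).
  destruct (close_unif X eps eta Heps Heta CX X0) as [dX [HdX HcX]].
  destruct (close_unif Y eps eta Heps Heta CY Y0) as [dY [HdY HcY]].
  set (d1 := Rmin eps (Rmin dX dY)).
  assert (Hd1 : 0 < d1) by (unfold d1; repeat apply Rmin_pos; auto).
  assert (Hd1e : forall t, Rabs t < d1 -> Rabs t < eps).
  { intros t Ht. eapply Rlt_le_trans; [exact Ht|apply Rmin_l]. }
  assert (Hsm : forall t s, Rabs t < d1 -> 0 <= s <= 1 ->
      X t s ^ 2 + Y t s ^ 2 < a ^ 2 /\ X t s ^ 2 + Y t s ^ 2 < 1).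
  { intros t s Ht Hs.
    assert (HtX : Rabs t < dX).
    { eapply Rlt_le_trans; [exact Ht|]. unfold d1. eapply Rle_trans; [apply Rmin_r|apply Rmin_l]. }
    assert (HtY : Rabs t < dY).
    { eapply Rlt_le_trans; [exact Ht|]. unfold d1. eapply Rle_trans; [apply Rmin_r|apply Rmin_r]. }
    specialize (HcX t s HtX Hs). specialize (HcY t s HtY Hs).
    rewrite <- (pow2_abs (X t s)), <- (pow2_abs (Y t s)).
    pose proof (Rabs_pos (X t s)). pose proof (Rabs_pos (Y t s)).
    assert (Hm1 : Rmin a 1 <= a) by apply Rmin_l.
    assert (Hm2 : Rmin a 1 <= 1) by apply Rmin_r.
    assert (Hm0 : 0 < Rmin a 1) by (apply Rmin_pos; lra).
    unfold eta in *. set (m := Rmin a 1) in *. clearbody m. split; nra. }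
  pose (E := fun t s => xs t s ^ 2 + ys t s ^ 2 + hF a (X t s) (Y t s) * zs t s ^ 2).
  assert (HEs : forall t r, Rabs t < d1 -> 0 <= r <= 1 -> is_derive (fun s => E t s) r 0).
  { intros t r Ht Hr. assert (Ht' := Hd1e t Ht). destruct (Hsm t r Ht Hr) as [Hs1 Hs2].
    destruct (ODE t r Ht' Hr) as [O1 [O2 O3]].
    assert (Hpos := hF_pos a (X t r) (Y t r) Ha Hs1 Hs2).
    unfold E. eapply is_derive_eq.
    - apply d_plus; [apply d_plus|].
      + apply d_sq. apply HXss; auto.
      + apply d_sq. apply HYss; auto.
      + apply d_mult.
        * apply (chain_hF a (fun s => X t s) (fun s => Y t s) r (xs t r) (ys t r) Ha); [apply HXs; auto | apply HYs; auto | exact Hs1].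
        * apply d_sq. apply HZss; auto.
    - rewrite O1, O2, O3. unfold zero; simpl. field. lra. }
  assert (En : forall t s, Rabs t < d1 -> 0 <= s <= 1 -> E t s = E t 0).
  { intros t s Ht Hs. destruct (Req_dec s 0) as [->|Hs0]; auto.
    symmetry. apply (eq_is_derive (fun s => E t s) 0 s); [|lra].
    intros r Hr. apply HEs; auto. lra. }
  pose (Ed := fun t s => 2 * xs t s * xts t s + 2 * ys t s * yts t s +
     ((dFx a (X t s) (Y t s) * xt t s + dFy a (X t s) (Y t s) * yt t s) * zs t s ^ 2 +
      hF a (X t s) (Y t s) * (2 * zs t s * zts t s))).
  assert (HEt : forall t s, Rabs t < d1 -> 0 <= s <= 1 -> is_derive (fun u => E u s) t (Ed t s)).
  { intros t s Ht Hs. assert (Ht' := Hd1e t Ht). destruct (Hsm t s Ht Hs) as [Hs1 Hs2].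
    unfold E, Ed. eapply is_derive_eq.
    - apply d_plus; [apply d_plus|].
      + apply d_sq. apply HXst; auto.
      + apply d_sq. apply HYst; auto.
      + apply d_mult.
        * apply (chain_hF a (fun u => X u s) (fun u => Y u s) t (xt t s) (yt t s) Ha); [apply HXt; auto | apply HYt; auto | exact Hs1].
        * apply d_sq. apply HZst; auto.
    - cbv beta. ring. }
  pose (Hf := fun t s => xt t s * xs t s + yt t s * ys t s + hF a (X t s) (Y t s) * (zt t s * zs t s)).
  assert (HHs : forall t r, Rabs t < d1 -> 0 <= r <= 1 -> is_derive (fun s => Hf t s) r (/ 2 * Ed t r)).
  { intros t r Ht Hr. assert (Ht' := Hd1e t Ht). destruct (Hsm t r Ht Hr) as [Hs1 Hs2].
    destruct (ODE t r Ht' Hr) as [O1 [O2 O3]].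
    assert (Hpos := hF_pos a (X t r) (Y t r) Ha Hs1 Hs2).
    unfold Hf. eapply is_derive_eq.
    - apply d_plus; [apply d_plus|].
      + apply d_mult; [apply HXts|apply HXss]; auto.
      + apply d_mult; [apply HYts|apply HYss]; auto.
      + apply d_mult.
        * apply (chain_hF a (fun s => X t s) (fun s => Y t s) r (xs t r) (ys t r) Ha); [apply HXs; auto | apply HYs; auto | exact Hs1].
        * apply d_mult; [apply HZts|apply HZss]; auto.
    - cbv beta. rewrite O1, O2, O3. unfold Ed. field. lra. }
  assert (HEd : forall t s, Rabs t < d1 -> 0 <= s <= 1 -> Ed t s = Ed t 0).
  { intros t s Ht Hs. apply (deriv_unique_loc (fun u => E u s) (fun u => E u 0) t d1).
    - exact Ht.
    - intros w Hw'. apply En; auto.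
    - apply HEt; auto.
    - apply HEt; auto; lra. }
  assert (HD : forall t, Rabs t < d1 -> Hf t 1 - Hf t 0 = / 2 * Ed t 0).
  { intros t Ht.
    assert (G : (fun s => Hf t s - s * (/ 2 * Ed t 0)) 0 = (fun s => Hf t s - s * (/ 2 * Ed t 0)) 1).
    { apply (eq_is_derive (fun s => Hf t s - s * (/ 2 * Ed t 0)) 0 1); [|lra].
      intros r Hr. eapply is_derive_eq.
      - apply d_minus; [apply HHs; auto|]. apply d_mult; [apply d_id|apply d_const].
      - rewrite HEd by auto. unfold zero; simpl. ring. }
    simpl in G. lra. }
  assert (Hend : forall t, Rabs t < eps ->
     X t 1 = X t 0 * cos (2 * PI / 3) - Y t 0 * sin (2 * PI / 3) /\
     Y t 1 = X t 0 * sin (2 * PI / 3) + Y t 0 * cos (2 * PI / 3) /\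
     Z t 1 = Z t 0 + c).
  { intros t Ht. destruct (Hgeo t Ht) as [_ HE]. unfold phi in HE. injection HE. auto. }
  assert (zt1 : forall t, Rabs t < eps -> zt t 1 = zt t 0).
  { intros t Ht. transitivity (zt t 0 + 0); [|ring].
    apply (deriv_unique_loc (fun w => Z w 1) (fun w => Z w 0 + c) t eps); auto.
    - intros w Hw'. apply Hend; auto.
    - apply d_plus; [apply HZt; auto|apply d_const]. }
  assert (ztt1 : ztt 0 1 = ztt 0 0).
  { apply (deriv_unique_loc (fun w => zt w 1) (fun w => zt w 0) 0 eps); auto. }
  assert (zt00 : zt 0 0 = 0).
  { apply (deriv_unique_loc (fun w => Z w 0) (fun w => Z w 0) 0 eps); auto. }
  assert (zt01 : zt 0 1 = 0) by (rewrite zt1; auto).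
  assert (xt00 : xt 0 0 = u).
  { apply (deriv_unique_loc (fun w => X w 0) (fun w => X w 0) 0 eps); auto. }
  assert (yt00 : yt 0 0 = v).
  { apply (deriv_unique_loc (fun w => Y w 0) (fun w => Y w 0) 0 eps); auto. }
  set (ct := cos (2 * PI / 3)). set (st := sin (2 * PI / 3)).
  assert (xt01 : xt 0 1 = u * ct - v * st).
  { rewrite <- xt00, <- yt00.
    apply (deriv_unique_loc (fun w => X w 1) (fun w => X w 0 * ct - Y w 0 * st) 0 eps); auto.
    - intros w Hw'. apply Hend; auto.
    - eapply is_derive_eq.
      + apply d_minus; (apply d_mult; [|apply d_const]); [apply HXt|apply HYt]; auto.
      + cbv beta. rewrite xt00, yt00. ring. }
  assert (yt01 : yt 0 1 = u * st + v * ct).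
  { rewrite <- xt00, <- yt00.
    apply (deriv_unique_loc (fun w => Y w 1) (fun w => X w 0 * st + Y w 0 * ct) 0 eps); auto.
    - intros w Hw'. apply Hend; auto.
    - eapply is_derive_eq.
      + apply d_plus; (apply d_mult; [|apply d_const]); [apply HXt|apply HYt]; auto.
      + cbv beta. rewrite xt00, yt00. ring. }
  (* the Jacobi equation along gamma_0 *)
  assert (Hd00 : Rabs 0 < d1) by (rewrite Rabs_R0; auto).
  assert (dF00 : dFx a 0 0 = 0 /\ dFy a 0 0 = 0).
  { rewrite dFx_val, dFy_val by (auto; nra). split; ring. }
  assert (Jx : forall s, 0 <= s <= 1 -> x3 s = - c ^ 2 * xt 0 s).
  { intros s Hs.
    destruct (dFx_curve a (fun w => X w s) (fun w => Y w s) 0 (xt 0 s) (yt 0 s) Ha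
       (HXt 0 s H0e) (HYt 0 s H0e) (X0 s Hs) (Y0 s Hs)) as [D1 _].
    apply (deriv_unique_loc (fun w => xss w s)
        (fun w => / 2 * dFx a (X w s) (Y w s) * zs w s ^ 2) 0 eps); auto.
    - intros w Hw'. apply ODE; auto.
    - eapply is_derive_eq.
      + apply d_mult; [apply d_scal; exact D1|apply d_sq; apply HZst; auto].
      + cbv beta. rewrite X0, Y0, zs0 by auto. rewrite (proj1 dF00). field. }
  assert (Jy : forall s, 0 <= s <= 1 -> y3 s = - c ^ 2 * yt 0 s).
  { intros s Hs.
    destruct (dFx_curve a (fun w => X w s) (fun w => Y w s) 0 (xt 0 s) (yt 0 s) Ha
       (HXt 0 s H0e) (HYt 0 s H0e) (X0 s Hs) (Y0 s Hs)) as [_ D1].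
    apply (deriv_unique_loc (fun w => yss w s)
        (fun w => / 2 * dFy a (X w s) (Y w s) * zs w s ^ 2) 0 eps); auto.
    - intros w Hw'. apply ODE; auto.
    - eapply is_derive_eq.
      + apply d_mult; [apply d_scal; exact D1|apply d_sq; apply HZst; auto].
      + cbv beta. rewrite X0, Y0, zs0 by auto. rewrite (proj2 dF00). field. }
  assert (Hc0 : c <> 0) by lra.
  destruct (osc (fun s => xt 0 s) (fun s => xts 0 s) x3 c Hc0) as [OX1 OX2].
  { intros s Hs. split; [apply HXts; auto|split; [apply HX3a|apply Jx; auto]]. }
  destruct (osc (fun s => yt 0 s) (fun s => yts 0 s) y3 c Hc0) as [OY1 OY2].
  { intros s Hs. split; [apply HYts; auto|split; [apply HY3a|apply Jy; auto]]. }
  simpl in OX1, OX2, OY1, OY2.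
  assert (Key : 0 < xt 0 1 * xts 0 1 + yt 0 1 * yts 0 1 - (xt 0 0 * xts 0 0 + yt 0 0 * yts 0 0)).
  { set (Bx := xts 0 0 / c) in *. set (By := yts 0 0 / c) in *.
    assert (HPI := PI_RGT_0).
    assert (Hsn : 0 < sin c) by (apply sin_gt_0; lra).
    assert (Hcs : ct < cos c) by (unfold ct; apply cos_decreasing_1; lra).
    assert (Hsc : sin c * sin c + cos c * cos c = 1) by (pose proof (sin2_cos2 c); unfold Rsqr in H; lra).
    assert (Hst : st * st + ct * ct = 1) by (pose proof (sin2_cos2 (2 * PI / 3)); unfold Rsqr in H; unfold st, ct; lra).
    rewrite xt00 in OX1, OX2. rewrite yt00 in OY1, OY2.
    pose proof (final_alg u v Bx By (cos c) (sin c) ct st Hsn Hcs Hsc Hst Huv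
       ltac:(rewrite <- xt01, OX1; ring) ltac:(rewrite <- yt01, OY1; ring)) as FA.
    assert (E1 : xts 0 1 = c * (- u * sin c + Bx * cos c)).
    { rewrite <- OX2. field. auto. }
    assert (E2 : yts 0 1 = c * (- v * sin c + By * cos c)).
    { rewrite <- OY2. field. auto. }
    assert (E3 : xts 0 0 = c * Bx) by (unfold Bx; field; auto).
    assert (E4 : yts 0 0 = c * By) by (unfold By; field; auto).
    rewrite E1, E2, E3, E4, xt00, yt00, OX1, OY1.
    set (F := (u * cos c + Bx * sin c) * (- u * sin c + Bx * cos c) +
       (v * cos c + By * sin c) * (- v * sin c + By * cos c) - (u * Bx + v * By)) in FA.
    replace ((u * cos c + Bx * sin c) * (c * (- u * sin c + Bx * cos c)) +
      (v * cos c + By * sin c) * (c * (- v * sin c + By * cos c)) - (u * (c * Bx) + v * (c * By)))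
      with (c * F) by (unfold F; ring).
    apply Rmult_lt_0_compat; auto. }
  assert (E00 : E 0 0 = c ^ 2).
  { unfold E. rewrite xs0, ys0, zs0, X0, Y0, hF_00 by (auto; lra). ring. }
  assert (Hneg := loc_lt_of_deriv (fun t => -1 * E t 0) 0 (-1 * Ed 0 0) 0
     (d_scal (fun t => E t 0) (-1) 0 (Ed 0 0) (HEt 0 0 Hd00 ltac:(lra)))
     ltac:(cbv beta; rewrite E00; nra)).
  destruct Hneg as [d2 Hd2].
  set (del := Rmin d1 d2).
  assert (Hdel : 0 < del) by (apply Rmin_pos; [auto|apply cond_pos]).
  assert (Hdel1 : forall t, Rabs t < del -> Rabs t < d1).
  { intros t Ht. eapply Rlt_le_trans; [exact Ht|apply Rmin_l]. }
  assert (Epos : forall t, Rabs t < del -> 0 < E t 0).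
  { intros t Ht. assert (Hb : ball 0 d2 t).
    { unfold ball; simpl; unfold AbsRing_ball, abs, minus, plus, opp; simpl.
      rewrite Ropp_0, Rplus_0_r. eapply Rlt_le_trans; [exact Ht|apply Rmin_r]. }
    specialize (Hd2 t Hb). simpl in Hd2. lra. }
  assert (HL : forall t, Rabs t < d1 -> Lh a (X t) (Y t) (Z t) = sqrt (E t 0)).
  { intros t Ht. unfold Lh.
    rewrite (RInt_ext _ (fun _ => sqrt (E t 0))).
    - rewrite RInt_const. unfold scal; simpl; unfold mult; simpl. ring.
    - intros x Hx. rewrite Rmin_left, Rmax_right in Hx by lra.
      assert (Hx' : 0 <= x <= 1) by lra.
      rewrite <- (En t x Ht Hx'). unfold E.
      rewrite (is_derive_unique (X t) x (xs t x)) by (apply HXs; auto).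
      rewrite (is_derive_unique (Y t) x (ys t x)) by (apply HYs; auto).
      rewrite (is_derive_unique (Z t) x (zs t x)) by (apply HZs; auto).
      reflexivity. }
  assert (HHt : forall j, 0 <= j <= 1 -> is_derive (fun t => Hf t j) 0
     ((xtt 0 j * xs 0 j + xt 0 j * xts 0 j) + (ytt 0 j * ys 0 j + yt 0 j * yts 0 j) +
      ((dFx a (X 0 j) (Y 0 j) * xt 0 j + dFy a (X 0 j) (Y 0 j) * yt 0 j) * (zt 0 j * zs 0 j) +
       hF a (X 0 j) (Y 0 j) * (ztt 0 j * zs 0 j + zt 0 j * zts 0 j)))).
  { intros j Hj. destruct (Hsm 0 j Hd00 Hj) as [Hs1 Hs2]. unfold Hf.
    eapply is_derive_eq; [apply d_plus; [apply d_plus|]|].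
    - apply d_mult; [apply HXtt|apply HXst]; auto.
    - apply d_mult; [apply HYtt|apply HYst]; auto.
    - apply d_mult.
      + apply (chain_hF a (fun u => X u j) (fun u => Y u j) 0 (xt 0 j) (yt 0 j) Ha); [apply HXt; auto | apply HYt; auto | exact Hs1].
      + apply d_mult; [apply HZtt|apply HZst]; auto.
    - cbv beta. ring. }
  exists (fun t => (Hf t 1 - Hf t 0) / sqrt (E t 0)).
  eexists. split; [|split].
  - exists del. split; auto. intros t Ht.
    eapply is_derive_ext_loc.
    + apply (locally_strip d1 t); [apply Hdel1; auto|]. intros w Hw'. symmetry. apply HL; auto.
    + eapply is_derive_eq; [apply is_derive_sqrt; [apply HEt; auto; lra|apply Epos; auto]|].
      rewrite HD by auto. assert (0 < sqrt (E t 0)) by (apply sqrt_lt_R0, Epos; auto).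
      field. lra.
  - apply is_derive_div.
    + apply d_minus; apply HHt; lra.
    + apply is_derive_sqrt; [apply HEt; auto; lra|]. rewrite E00; nra.
    + rewrite E00. rewrite sqrt_pow2 by lra. lra.
  - cbv beta. rewrite E00, sqrt_pow2 by lra.
    assert (Hf0 : Hf 0 1 - Hf 0 0 = 0).
    { unfold Hf. rewrite xs0, ys0, zt00, zt01, xs0, ys0 by lra. ring. }
    rewrite Hf0. rewrite (xs0 1), (xs0 0), (ys0 1), (ys0 0) by lra. rewrite zt00, zt01, zs0, zs0, X0, Y0, X0, Y0, hF_00, ztt1 by (auto; lra).
    match goal with |- 0 < ?N / _ =>
      replace N with ((xt 0 1 * xts 0 1 + yt 0 1 * yts 0 1 - (xt 0 0 * xts 0 0 + yt 0 0 * yts 0 0)) * c) by ring end.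
    apply Rdiv_lt_0_compat; [apply Rmult_lt_0_compat; auto|nra].
Qed.
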